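(* Let $V=H^0(\mathbb{P}^2,T_{\mathbb{P}^2})$ (an $8$-dimensional complex vector space) and let $\mathcal{S}\subset V^4$ be the set of ordered $4$-tuples $S=(w_1,\dots,w_4)$ of linearly independent sections generating $T_{\mathbb{P}^2}$ at every point; $\mathcal{S}$ is a nonempty Zariski open subset of $V^4$. Then there is a nonempty Zariski open subset $U\subset\mathcal{S}$ such that for every $S\in U$ the morphism $\phi_S:\mathbb{P}^2\to\mathrm{Gr}(2,\mathbb{C}^4)$ is generically injective (birational onto its image).
   Context: Work over $\mathbb{C}$. $T_{\mathbb{P}^2}$ is the tangent bundle of $\mathbb{P}^2$. $\mathrm{Gr}(2,\mathbb{C}^4)$ is the Grassmannian of $2$-dimensional quotients of $\mathbb{C}^4$, with universal quotient bundle $\mathcal{O}^4\to Q\to 0$. For an ordered $4$-tuple $S=(w_1,\dots,w_4)$ of global sections of $T_{\mathbb{P}^2}$ generating $T_{\mathbb{P}^2}$ at every point, $\phi_S:\mathbb{P}^2\to\mathrm{Gr}(2,\mathbb{C}^4)$ is the morphism sending $x$ to the quotient $\mathbb{C}^4=\mathcal{O}^4_{\mathbb{P}^2}|_x\to T_{\mathbb{P}^2}|_x$ induced by $(a_1,\dots,a_4)\mapsto\sum a_iw_i(x)$; thus $\phi_S^*Q\cong T_{\mathbb{P}^2}$. *)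

(* Defs.v *)
From HB Require Import structures.
From mathcomp Require Import all_boot all_order all_algebra.
Set Implicit Arguments. Unset Strict Implicit. Unset Printing Implicit Defensive.
Import GRing.Theory.
Local Open Scope ring_scope.

Inductive mpoly (I : Type) (R : Type) : Type :=
| MConst of R
| MVar of I
| MAdd of mpoly I R & mpoly I R
| MMul of mpoly I R & mpoly I R.

Fixpoint meval (I : Type) (R : nzRingType) (v : I -> R) (p : mpoly I R) : R :=
  match p with
  | MConst c => c
  | MVar i => v i
  | MAdd p q => meval v p + meval v q
  | MMul p q => meval v p * meval v q
  end.

Definition zariski_open_in (I : Type) (R : nzRingType)
    (X U : (I -> R) -> Prop) : Prop :=
  (forall v, U v -> X v) /\
  exists fs : seq (mpoly I R),
    forall v, X v -> (U v <-> has (fun f => meval v f != 0) fs).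

(* A global vector field on P^2 is represented by a traceless 3x3 matrix A
   (H^0(T_P2) = gl_3 / <I> = sl_3 via the Euler sequence); its value at the
   point [x] (x a nonzero row vector) is the class of x *m A in C^3/<x>. *)
Definition V4 (R : nzRingType) (S : 'I_4 -> 'M[R]_3) : Prop :=
  forall i, \tr (S i) = 0.

Definition coords4 (R : nzRingType) (S : 'I_4 -> 'M[R]_3)
  : ('I_4 * 'I_3 * 'I_3) -> R := fun ijk => S ijk.1.1 ijk.1.2 ijk.2.

Definition zariski_open_V4 (R : nzRingType) (U : ('I_4 -> 'M[R]_3) -> Prop)
  : Prop :=
  (forall S, U S -> V4 S) /\
  exists fs : seq (mpoly ('I_4 * 'I_3 * 'I_3) R),
    forall S, V4 S -> (U S <-> has (fun f => meval (coords4 S) f != 0) fs).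

(* rows: representatives of w_i(x) in C^3 *)
Definition secmx (R : nzRingType) (S : 'I_4 -> 'M[R]_3) (x : 'rV[R]_3)
  : 'M[R]_(4, 3) := \matrix_(i < 4) (x *m S i).

(* w_1,...,w_4 generate T_P2 at [x]: the w_i(x) together with x span C^3 *)
Definition generates (R : fieldType) (S : 'I_4 -> 'M[R]_3) : Prop :=
  forall x : 'rV[R]_3, x != 0 -> row_full (col_mx (secmx S x) x).

Definition lin_indep (R : fieldType) (S : 'I_4 -> 'M[R]_3) : Prop :=
  row_free (\matrix_(i < 4) mxvec (S i)).

Definition admissible (R : fieldType) (S : 'I_4 -> 'M[R]_3) : Prop :=
  [/\ V4 S, lin_indep S & generates S].

(* phi_S(x) = phi_S(y): the quotients C^4 -> T_x, C^4 -> T_y,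
   (a_i) |-> sum a_i w_i, have the same kernel. *)
Definition phi_eq (R : fieldType) (S : 'I_4 -> 'M[R]_3) (x y : 'rV[R]_3)
  : Prop :=
  forall a : 'rV[R]_4,
    ((a *m secmx S x) <= x)%MS = ((a *m secmx S y) <= y)%MS.

Definition rcoords (R : nzRingType) (x : 'rV[R]_3) : 'I_3 -> R :=
  fun i => x ord0 i.

Definition homogeneous (R : nzRingType) (f : mpoly 'I_3 R) : Prop :=
  exists d : nat, forall (c : R) (x : 'rV[R]_3),
    meval (rcoords (c *: x)) f = c ^+ d * meval (rcoords x) f.

(* W (a set of nonzero vectors, i.e. a cone over a subset of P^2) is a
   Zariski open subset of P^2: the non-common-vanishing locus of finitely
   many homogeneous polynomials. *)
Definition zariski_open_P2 (R : nzRingType) (W : 'rV[R]_3 -> Prop) : Prop :=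
  exists fs : seq (mpoly 'I_3 R),
    (forall k, (k < size fs)%N -> homogeneous (nth (MConst _ 0) fs k)) /\
    forall x, W x <-> (x != 0 /\ has (fun f => meval (rcoords x) f != 0) fs).

Definition generically_injective (R : fieldType) (S : 'I_4 -> 'M[R]_3)
  : Prop :=
  exists W : 'rV[R]_3 -> Prop,
    [/\ zariski_open_P2 W, (exists x, W x) &
        forall x y, W x -> y != 0 -> phi_eq S x y -> (y <= x)%MS].

(* Main.v *)
Require Import Defs.
From HB Require Import structures.
From mathcomp Require Import all_boot all_order all_algebra.
From mathcomp Require Import ring.
Set Implicit Arguments. Unset Strict Implicit. Unset Printing Implicit Defensive.
Import GRing.Theory.
Local Open Scope ring_scope.


Definition o0 : 'I_3 := @Ordinal 3 0 isT.
Definition o1 : 'I_3 := @Ordinal 3 1 isT.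
Definition o2 : 'I_3 := @Ordinal 3 2 isT.

Lemma ord3P (P : 'I_3 -> Prop) : P o0 -> P o1 -> P o2 -> forall i, P i.
Proof.
move=> h0 h1 h2 [[|[|[|n]]] Hi].
- by rewrite (_ : Ordinal Hi = o0) //; apply: val_inj.
- by rewrite (_ : Ordinal Hi = o1) //; apply: val_inj.
- by rewrite (_ : Ordinal Hi = o2) //; apply: val_inj.
- by [].
Qed.

Lemma sum3 (R : nmodType) (F : 'I_3 -> R) : \sum_(i < 3) F i = F o0 + F o1 + F o2.
Proof.
rewrite !big_ord_recl big_ord0 addr0 addrA.
congr (F _ + F _ + F _); by apply: val_inj.
Qed.

Definition pf (T I : Type) (R : nzRingType) (env : T -> I -> R) (F : T -> R) :=
  exists p : mpoly I R, forall t, meval (env t) p = F t.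

Section PF.
Variables (T I : Type) (R : comNzRingType) (env : T -> I -> R).
Lemma pf_const c : pf env (fun _ => c).
Proof. by exists (MConst I c). Qed.
Lemma pf_var i : pf env (fun t => env t i).
Proof. by exists (MVar R i). Qed.
Lemma pf_ext F G : (forall t, F t = G t) -> pf env G -> pf env F.
Proof. by move=> e [p hp]; exists p => t; rewrite hp e. Qed.
Lemma pf_add F G : pf env F -> pf env G -> pf env (fun t => F t + G t).
Proof. by move=> [p hp] [q hq]; exists (MAdd p q) => t /=; rewrite hp hq. Qed.
Lemma pf_mul F G : pf env F -> pf env G -> pf env (fun t => F t * G t).
Proof. by move=> [p hp] [q hq]; exists (MMul p q) => t /=; rewrite hp hq. Qed.
Lemma pf_opp F : pf env F -> pf env (fun t => - F t).
Proof.
move=> [p hp]; exists (MMul (MConst I (-1)) p) => t /=; by rewrite hp mulN1r.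
Qed.
Lemma pf_sub F G : pf env F -> pf env G -> pf env (fun t => F t - G t).
Proof. by move=> hF hG; apply: pf_add => //; apply: pf_opp. Qed.
Lemma pf_sum (J : Type) (r : seq J) (P : pred J) (F : J -> T -> R) :
  (forall j, pf env (F j)) -> pf env (fun t => \sum_(j <- r | P j) F j t).
Proof.
move=> hF; elim: r => [|j r IH].
  apply: (pf_ext (G := fun _ => 0)); last exact: pf_const.
  by move=> t; rewrite big_nil.
case hP : (P j).
  apply: (pf_ext (G := fun t => F j t + \sum_(j <- r | P j) F j t)).
    by move=> t; rewrite big_cons hP.
  exact: pf_add.
by apply: (pf_ext (G := fun t => \sum_(j <- r | P j) F j t)) => // t; rewrite big_cons hP.
Qed.
Lemma pf_prod (J : Type) (r : seq J) (P : pred J) (F : J -> T -> R) :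
  (forall j, pf env (F j)) -> pf env (fun t => \prod_(j <- r | P j) F j t).
Proof.
move=> hF; elim: r => [|j r IH].
  apply: (pf_ext (G := fun _ => 1)); last exact: pf_const.
  by move=> t; rewrite big_nil.
case hP : (P j).
  apply: (pf_ext (G := fun t => F j t * \prod_(j <- r | P j) F j t)).
    by move=> t; rewrite big_cons hP.
  exact: pf_mul.
by apply: (pf_ext (G := fun t => \prod_(j <- r | P j) F j t)) => // t; rewrite big_cons hP.
Qed.

Definition pfm m n (F : T -> 'M[R]_(m, n)) := forall i j, pf env (fun t => F t i j).

Lemma pfm_const m n (A : 'M[R]_(m, n)) : pfm (fun _ => A).
Proof. by move=> i j; apply: pf_const. Qed.
Lemma pfm_add m n (F G : T -> 'M[R]_(m, n)) : pfm F -> pfm G -> pfm (fun t => F t + G t).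
Proof. move=> hF hG i j; apply: (pf_ext (G := fun t => F t i j + G t i j)) => [t|]; [by rewrite mxE | exact: pf_add]. Qed.
Lemma pfm_sub m n (F G : T -> 'M[R]_(m, n)) : pfm F -> pfm G -> pfm (fun t => F t - G t).
Proof. move=> hF hG i j; apply: (pf_ext (G := fun t => F t i j - G t i j)) => [t|]; [by rewrite !mxE | exact: pf_sub]. Qed.
Lemma pfm_scale m n (c : T -> R) (F : T -> 'M[R]_(m, n)) : pf env c -> pfm F -> pfm (fun t => c t *: F t).
Proof. move=> hc hF i j; apply: (pf_ext (G := fun t => c t * F t i j)) => [t|]; [by rewrite mxE | exact: pf_mul]. Qed.
Lemma pfm_mul m n p (F : T -> 'M[R]_(m, n)) (G : T -> 'M[R]_(n, p)) : pfm F -> pfm G -> pfm (fun t => F t *m G t).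
Proof.
move=> hF hG i j; apply: (pf_ext (G := fun t => \sum_(k <- index_enum 'I_n | true) F t i k * G t k j)).
  by move=> t; rewrite mxE.
by apply: pf_sum => k; apply: pf_mul.
Qed.
Lemma pfm_sum m n (J : Type) (r : seq J) (P : pred J) (F : J -> T -> 'M[R]_(m, n)) :
  (forall j, pfm (F j)) -> pfm (fun t => \sum_(j <- r | P j) F j t).
Proof.
move=> hF i k; apply: (pf_ext (G := fun t => \sum_(j <- r | P j) F j t i k)).
  by move=> t; rewrite summxE.
by apply: pf_sum => j; apply: hF.
Qed.
Lemma pf_det n (F : T -> 'M[R]_n) : pfm F -> pf env (fun t => \det (F t)).
Proof.
move=> hF; rewrite /determinant; apply: pf_sum => s; apply: pf_mul; first exact: pf_const.
by apply: pf_prod => i; apply: hF.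
Qed.
End PF.


Notation O10 k := (@Ordinal 10 k isT).

Lemma sum10 (R : nmodType) (F : 'I_10 -> R) : \sum_(i < 10) F i =
  F (O10 0) + F (O10 1) + F (O10 2) + F (O10 3) + F (O10 4) + F (O10 5) + F (O10 6)
  + F (O10 7) + F (O10 8) + F (O10 9).
Proof.
rewrite !big_ord_recl big_ord0 addr0 !addrA.
by congr (_ + _ + _ + _ + _ + _ + _ + _ + _ + _); congr F; apply: val_inj.
Qed.

Definition det3f (R : comNzRingType) (u v w : 'I_3 -> R) : R :=
  u o0 * (v o1 * w o2 - v o2 * w o1) - u o1 * (v o0 * w o2 - v o2 * w o0)
  + u o2 * (v o0 * w o1 - v o1 * w o0).
Definition minor (R : comNzRingType) (u v w : 'rV[R]_3) : R :=
  det3f (u ord0) (v ord0) (w ord0).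
Definition Tt (R : comNzRingType) (Ba Bb Bc : 'M[R]_3) p j k : R :=
  det3f (Ba p) (Bb j) (Bc k).
Definition coef (R : comNzRingType) (Ba Bb Bc : 'M[R]_3) (m : 'I_10) : R :=
  match val m with
  | 0 => Tt Ba Bb Bc o0 o0 o1 + Tt Ba Bb Bc o0 o1 o0 + Tt Ba Bb Bc o1 o0 o0
  | 1 => Tt Ba Bb Bc o0 o2 o2 + Tt Ba Bb Bc o2 o0 o2 + Tt Ba Bb Bc o2 o2 o0
  | 2 => Tt Ba Bb Bc o0 o1 o1 + Tt Ba Bb Bc o1 o0 o1 + Tt Ba Bb Bc o1 o1 o0
  | 3 => Tt Ba Bb Bc o1 o2 o2 + Tt Ba Bb Bc o2 o1 o2 + Tt Ba Bb Bc o2 o2 o1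
  | 4 => Tt Ba Bb Bc o0 o0 o0
  | 5 => Tt Ba Bb Bc o0 o1 o2 + Tt Ba Bb Bc o0 o2 o1 + Tt Ba Bb Bc o1 o0 o2 + Tt Ba Bb Bc o1 o2 o0 + Tt Ba Bb Bc o2 o0 o1 + Tt Ba Bb Bc o2 o1 o0
  | 6 => Tt Ba Bb Bc o2 o2 o2
  | 7 => Tt Ba Bb Bc o1 o1 o1
  | 8 => Tt Ba Bb Bc o0 o0 o2 + Tt Ba Bb Bc o0 o2 o0 + Tt Ba Bb Bc o2 o0 o0
  | _ => Tt Ba Bb Bc o1 o1 o2 + Tt Ba Bb Bc o1 o2 o1 + Tt Ba Bb Bc o2 o1 o1
  end.
Definition mon (R : comNzRingType) (x : 'rV[R]_3) (m : 'I_10) : R :=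
  match val m with
  | 0 => x ord0 o0 * x ord0 o0 * x ord0 o1
  | 1 => x ord0 o0 * x ord0 o2 * x ord0 o2
  | 2 => x ord0 o0 * x ord0 o1 * x ord0 o1
  | 3 => x ord0 o1 * x ord0 o2 * x ord0 o2
  | 4 => x ord0 o0 * x ord0 o0 * x ord0 o0
  | 5 => x ord0 o0 * x ord0 o1 * x ord0 o2
  | 6 => x ord0 o2 * x ord0 o2 * x ord0 o2
  | 7 => x ord0 o1 * x ord0 o1 * x ord0 o1
  | 8 => x ord0 o0 * x ord0 o0 * x ord0 o2
  | _ => x ord0 o1 * x ord0 o1 * x ord0 o2
  end.

Lemma vmE (R : comNzRingType) (x : 'rV[R]_3) (B : 'M[R]_3) j :
  (x *m B) ord0 j = x ord0 o0 * B o0 j + x ord0 o1 * B o1 j + x ord0 o2 * B o2 j.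
Proof. by rewrite mxE sum3. Qed.

Lemma minor_coef (R : comNzRingType) (x : 'rV[R]_3) (Ba Bb Bc : 'M[R]_3) :
  minor (x *m Ba) (x *m Bb) (x *m Bc) = \sum_(m < 10) coef Ba Bb Bc m * mon x m.
Proof.
rewrite /minor /det3f !vmE sum10 /coef /mon /Tt /det3f /=.
ring.
Qed.


Definition p0 : 'I_4 := @Ordinal 4 0 isT.
Definition p1 : 'I_4 := @Ordinal 4 1 isT.
Definition p2 : 'I_4 := @Ordinal 4 2 isT.
Definition p3 : 'I_4 := @Ordinal 4 3 isT.

Definition I3 (R : nzRingType) : 'M[R]_3 :=
  \matrix_(j, k) (if val j == val k then 1 else 0).

Lemma mulI3 (R : comNzRingType) (x : 'rV[R]_3) : x *m I3 R = x.
Proof.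
apply/rowP => j; rewrite mxE sum3 !mxE.
by elim/ord3P: j => /=; rewrite ?mulr0 ?mulr1 ?add0r ?addr0.
Qed.

Definition Bn (R : nzRingType) (S : 'I_4 -> 'M[R]_3) (n : nat) : 'M[R]_3 :=
  match n with 0 => I3 R | 1 => S p0 | 2 => S p1 | 3 => S p2 | _ => S p3 end.

Definition tri (k : 'I_10) : nat * nat * nat :=
  match val k with
  | 0 => (1,2,4)%N | 1 => (0,1,3)%N | 2 => (1,3,4)%N | 3 => (0,2,4)%N
  | 4 => (0,1,2)%N | 5 => (0,1,4)%N | 6 => (0,2,3)%N | 7 => (0,3,4)%N
  | 8 => (1,2,3)%N | _ => (2,3,4)%N end.

Definition Cmat (R : comNzRingType) (S : 'I_4 -> 'M[R]_3) : 'M[R]_10 :=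
  \matrix_(k, m) coef (Bn S (tri k).1.1) (Bn S (tri k).1.2) (Bn S (tri k).2) m.
Definition Dv (R : comNzRingType) (S : 'I_4 -> 'M[R]_3) (x : 'rV[R]_3) : 'cV[R]_10 :=
  \col_k minor (x *m Bn S (tri k).1.1) (x *m Bn S (tri k).1.2) (x *m Bn S (tri k).2).
Definition monv (R : comNzRingType) (x : 'rV[R]_3) : 'cV[R]_10 := \col_m mon x m.

Lemma Dv_C (R : comNzRingType) S (x : 'rV[R]_3) : Dv S x = Cmat S *m monv x.
Proof.
apply/matrixP => k j; rewrite !mxE minor_coef; apply: eq_bigr => m _.
by rewrite !mxE.
Qed.

Lemma dotE (R : comNzRingType) (u : 'rV[R]_3) (c : 'cV[R]_3) :
  (u *m c) ord0 ord0 = u ord0 o0 * c o0 ord0 + u ord0 o1 * c o1 ord0 + u ord0 o2 * c o2 ord0.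
Proof. by rewrite mxE sum3. Qed.

Lemma minor0 (R : fieldType) (u v w : 'rV[R]_3) (c : 'cV[R]_3) i :
  u *m c = 0 -> v *m c = 0 -> w *m c = 0 -> c i ord0 != 0 -> minor u v w = 0.
Proof.
move=> hu hv hw hc.
have du := congr1 (fun M : 'M[R]_1 => M ord0 ord0) hu.
have dv := congr1 (fun M : 'M[R]_1 => M ord0 ord0) hv.
have dw := congr1 (fun M : 'M[R]_1 => M ord0 ord0) hw.
move: du dv dw; rewrite /= !dotE !mxE => du dv dw.
have key : minor u v w * c i ord0 = 0.
  move: hc; elim/ord3P: i => _; rewrite /minor /det3f.
  - have -> : (u ord0 o0 * (v ord0 o1 * w ord0 o2 - v ord0 o2 * w ord0 o1) -
      u ord0 o1 * (v ord0 o0 * w ord0 o2 - v ord0 o2 * w ord0 o0) +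
      u ord0 o2 * (v ord0 o0 * w ord0 o1 - v ord0 o1 * w ord0 o0)) * c o0 ord0
      = (u ord0 o0 * c o0 ord0 + u ord0 o1 * c o1 ord0 + u ord0 o2 * c o2 ord0) * (v ord0 o1 * w ord0 o2 - v ord0 o2 * w ord0 o1)
      + (v ord0 o0 * c o0 ord0 + v ord0 o1 * c o1 ord0 + v ord0 o2 * c o2 ord0) * (w ord0 o1 * u ord0 o2 - w ord0 o2 * u ord0 o1)
      + (w ord0 o0 * c o0 ord0 + w ord0 o1 * c o1 ord0 + w ord0 o2 * c o2 ord0) * (u ord0 o1 * v ord0 o2 - u ord0 o2 * v ord0 o1) by ring.
    by rewrite du dv dw !mul0r !addr0.
  - have -> : (u ord0 o0 * (v ord0 o1 * w ord0 o2 - v ord0 o2 * w ord0 o1) -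
      u ord0 o1 * (v ord0 o0 * w ord0 o2 - v ord0 o2 * w ord0 o0) +
      u ord0 o2 * (v ord0 o0 * w ord0 o1 - v ord0 o1 * w ord0 o0)) * c o1 ord0
      = (u ord0 o0 * c o0 ord0 + u ord0 o1 * c o1 ord0 + u ord0 o2 * c o2 ord0) * (v ord0 o2 * w ord0 o0 - v ord0 o0 * w ord0 o2)
      + (v ord0 o0 * c o0 ord0 + v ord0 o1 * c o1 ord0 + v ord0 o2 * c o2 ord0) * (w ord0 o2 * u ord0 o0 - w ord0 o0 * u ord0 o2)
      + (w ord0 o0 * c o0 ord0 + w ord0 o1 * c o1 ord0 + w ord0 o2 * c o2 ord0) * (u ord0 o2 * v ord0 o0 - u ord0 o0 * v ord0 o2) by ring.
    by rewrite du dv dw !mul0r !addr0.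
  - have -> : (u ord0 o0 * (v ord0 o1 * w ord0 o2 - v ord0 o2 * w ord0 o1) -
      u ord0 o1 * (v ord0 o0 * w ord0 o2 - v ord0 o2 * w ord0 o0) +
      u ord0 o2 * (v ord0 o0 * w ord0 o1 - v ord0 o1 * w ord0 o0)) * c o2 ord0
      = (u ord0 o0 * c o0 ord0 + u ord0 o1 * c o1 ord0 + u ord0 o2 * c o2 ord0) * (v ord0 o0 * w ord0 o1 - v ord0 o1 * w ord0 o0)
      + (v ord0 o0 * c o0 ord0 + v ord0 o1 * c o1 ord0 + v ord0 o2 * c o2 ord0) * (w ord0 o0 * u ord0 o1 - w ord0 o1 * u ord0 o0)
      + (w ord0 o0 * c o0 ord0 + w ord0 o1 * c o1 ord0 + w ord0 o2 * c o2 ord0) * (u ord0 o0 * v ord0 o1 - u ord0 o1 * v ord0 o0) by ring.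
    by rewrite du dv dw !mul0r !addr0.
by move/eqP: key; rewrite mulf_eq0 (negbTE hc) orbF => /eqP.
Qed.

Lemma gen_of_det (R : fieldType) (S : 'I_4 -> 'M[R]_3) :
  \det (Cmat S) != 0 -> generates S.
Proof.
move=> hdet x xn0.
set M := col_mx (secmx S x) x.
case hf : (row_full M) => //; exfalso.
have hK : cokermx M != 0.
  apply/negP => /eqP hK; move: hf; rewrite /row_full.
  have := mxrank_coker M; rewrite hK mxrank0 => /esym/eqP.
  rewrite subn_eq0 => h; have := rank_leq_col M => h2.
  by rewrite eqn_leq h h2.
have [i [j hij]] : exists i j, cokermx M i j != 0.
  case: (boolP [exists i, exists j, cokermx M i j != 0]).
    by move=> /existsP [i /existsP [j h]]; exists i, j.
  move=> /existsPn hn; exfalso; move/eqP: hK; apply; apply/matrixP => i j.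
  by move/existsPn: (hn i) => /(_ j) /negPn /eqP ->; rewrite mxE.
set c := col j (cokermx M).
have hMc : M *m c = 0 by rewrite /c colE mulmxA mulmx_coker mul0mx.
have hc : c i ord0 != 0 by rewrite /c mxE.
move: hMc; rewrite /M mul_col_mx => /eqP; rewrite col_mx_eq0 => /andP [/eqP h1 /eqP h2].
have hS : forall k : 'I_4, (x *m S k) *m c = 0.
  move=> k; have := congr1 (row k) h1; rewrite row_mul row0 /secmx rowK //.
have hB : forall n, (x *m Bn S n) *m c = 0.
  by case=> [|[|[|[|n]]]] /=; rewrite ?mulI3 ?hS.
have hD : Dv S x = 0.
  apply/matrixP => k l; rewrite !mxE; apply: (minor0 (i:=i)) => //.
have hU : Cmat S \in unitmx by rewrite unitmxE unitfE.
have hm : monv x = 0 by rewrite -(mulKmx hU (monv x)) -Dv_C hD mulmx0.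
have e4 := congr1 (fun M : 'cV[R]_10 => M (O10 4) ord0) hm.
have e7 := congr1 (fun M : 'cV[R]_10 => M (O10 7) ord0) hm.
have e6 := congr1 (fun M : 'cV[R]_10 => M (O10 6) ord0) hm.
move: e4 e7 e6; rewrite /= !mxE /mon /= => e4 e7 e6.
have z0 : x ord0 o0 = 0 by apply/eqP; move/eqP: e4; rewrite !mulf_eq0 !orbb.
have z1 : x ord0 o1 = 0 by apply/eqP; move/eqP: e7; rewrite !mulf_eq0 !orbb.
have z2 : x ord0 o2 = 0 by apply/eqP; move/eqP: e6; rewrite !mulf_eq0 !orbb.
move/eqP: xn0; apply; apply/rowP; elim/ord3P; by rewrite mxE.
Qed.


Definition rj (l : 'I_4) : 'I_3 := match val l with 0 => o0 | 1 => o0 | 2 => o1 | _ => o1 end.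
Definition rk (l : 'I_4) : 'I_3 := match val l with 0 => o1 | 1 => o2 | 2 => o2 | _ => o0 end.
Definition Msub (R : nzRingType) (S : 'I_4 -> 'M[R]_3) : 'M[R]_4 :=
  \matrix_(i, l) S i (rj l) (rk l).

Lemma li_of_det (R : fieldType) (S : 'I_4 -> 'M[R]_3) :
  \det (Msub S) != 0 -> lin_indep S.
Proof.
move=> hd; rewrite /lin_indep.
set A := \matrix_(i < 4) mxvec (S i).
pose P : 'M[R]_(3 * 3, 4) := \matrix_(j, l) (if j == mxvec_index (rj l) (rk l) then 1 else 0).
have hAP : A *m P = Msub S.
  apply/matrixP => i l; rewrite !mxE (bigD1 (mxvec_index (rj l) (rk l))) //= big1.
    by rewrite !mxE eqxx mulr1 addr0 mxvecE.
  by move=> j /negbTE hj; rewrite !mxE hj mulr0.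
have hU : row_free (Msub S) by rewrite row_free_unit unitmxE unitfE.
rewrite /row_free eqn_leq rank_leq_row /=.
have h4 : \rank (Msub S) = 4%N by apply/eqP.
by rewrite -[X in (X <= _)%N]h4 -hAP mxrankM_maxl.
Qed.


Lemma ord4P (P : 'I_4 -> Prop) : P p0 -> P p1 -> P p2 -> P p3 -> forall i, P i.
Proof.
move=> h0 h1 h2 h3 [[|[|[|[|n]]]] Hi].
- by rewrite (_ : Ordinal Hi = p0) //; apply: val_inj.
- by rewrite (_ : Ordinal Hi = p1) //; apply: val_inj.
- by rewrite (_ : Ordinal Hi = p2) //; apply: val_inj.
- by rewrite (_ : Ordinal Hi = p3) //; apply: val_inj.
- by [].
Qed.

Lemma sum4 (R : nmodType) (F : 'I_4 -> R) : \sum_(i < 4) F i = F p0 + F p1 + F p2 + F p3.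
Proof.
rewrite !big_ord_recl big_ord0 addr0 !addrA.
congr (F _ + F _ + F _ + F _); by apply: val_inj.
Qed.

Section Inj.
Variable R : comNzRingType.
Implicit Types (S : 'I_4 -> 'M[R]_3) (x : 'rV[R]_3).

Definition acoef S x (i : 'I_4) : R :=
  match val i with
  | 0 => minor x (x *m S p1) (x *m S p2)
  | 1 => - minor x (x *m S p0) (x *m S p2)
  | 2 => minor x (x *m S p0) (x *m S p1)
  | _ => 0 end.
Definition bcoef S x (i : 'I_4) : R :=
  match val i with
  | 0 => minor x (x *m S p1) (x *m S p3)
  | 1 => - minor x (x *m S p0) (x *m S p3)
  | 2 => 0
  | _ => minor x (x *m S p0) (x *m S p1) end.
Definition Pm S x : 'M[R]_3 := \sum_i acoef S x i *: S i.
Definition Qm S x : 'M[R]_3 := \sum_i bcoef S x i *: S i.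
Definition Cm S x : 'M[R]_3 := Pm S x *m Qm S x - Qm S x *m Pm S x.
Definition gpol S x : R := Cm S x o0 o0 * Cm S x o1 o1 - Cm S x o0 o1 * Cm S x o1 o0.

Lemma secmx_mul S (a : 'rV[R]_4) z : a *m secmx S z = z *m (\sum_i a ord0 i *: S i).
Proof.
rewrite mulmx_sum_row mulmx_sumr; apply: eq_bigr => i _.
by rewrite /secmx rowK scalemxAr.
Qed.

Lemma ident4 (x v1 v2 v3 : 'rV[R]_3) :
  minor x v2 v3 *: v1 - minor x v1 v3 *: v2 + minor x v1 v2 *: v3 = minor v1 v2 v3 *: x.
Proof.
apply/rowP => j; rewrite !mxE /minor /det3f.
elim/ord3P: j; ring.
Qed.

Lemma xP S x : x *m Pm S x = minor (x *m S p0) (x *m S p1) (x *m S p2) *: x.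
Proof.
rewrite /Pm mulmx_sumr sum4 -!scalemxAr /acoef /= scaleNr scale0r addr0.
by rewrite -ident4.
Qed.

Lemma xQ S x : x *m Qm S x = minor (x *m S p0) (x *m S p1) (x *m S p3) *: x.
Proof.
rewrite /Qm mulmx_sumr sum4 -!scalemxAr /bcoef /= scaleNr scale0r addr0.
by rewrite -ident4.
Qed.

Lemma eig_comm (P Q : 'M[R]_3) (y : 'rV[R]_3) mu nu :
  y *m P = mu *: y -> y *m Q = nu *: y -> y *m (P *m Q - Q *m P) = 0.
Proof.
move=> hP hQ; rewrite mulmxBr !mulmxA hP hQ -!scalemxAl hP hQ !scalerA mulrC.
by rewrite subrr.
Qed.

Lemma minor_scale c (u v w : 'rV[R]_3) : minor (c *: u) (c *: v) (c *: w) = c ^+ 3 * minor u v w.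
Proof. rewrite /minor /det3f !mxE; ring. Qed.

Lemma acoef_scale S x c i : acoef S (c *: x) i = c ^+ 3 * acoef S x i.
Proof.
rewrite /acoef -!scalemxAl; case: i => [[|[|[|n]]] Hi] /=; rewrite ?minor_scale ?mulrN ?mulr0 //.
Qed.
Lemma bcoef_scale S x c i : bcoef S (c *: x) i = c ^+ 3 * bcoef S x i.
Proof.
rewrite /bcoef -!scalemxAl; case: i => [[|[|[|n]]] Hi] /=; rewrite ?minor_scale ?mulrN ?mulr0 //.
Qed.

Lemma Cm_scale S x c : Cm S (c *: x) = (c ^+ 3 * c ^+ 3) *: Cm S x.
Proof.
have hP : Pm S (c *: x) = c ^+ 3 *: Pm S x.
  by rewrite /Pm scaler_sumr; apply: eq_bigr => i _; rewrite acoef_scale scalerA.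
have hQ : Qm S (c *: x) = c ^+ 3 *: Qm S x.
  by rewrite /Qm scaler_sumr; apply: eq_bigr => i _; rewrite bcoef_scale scalerA.
rewrite /Cm hP hQ -!scalemxAl -!scalemxAr !scalerA scalerBr.
by rewrite [c ^+ 3 * c ^+ 3]mulrC.
Qed.

Lemma gpol_scale S x c : gpol S (c *: x) = c ^+ 12 * gpol S x.
Proof. rewrite /gpol Cm_scale !mxE; ring. Qed.

End Inj.

Lemma ker_line (R : fieldType) (C : 'M[R]_3) (x y : 'rV[R]_3) :
  x *m C = 0 -> y *m C = 0 -> C o0 o0 * C o1 o1 - C o0 o1 * C o1 o0 != 0 ->
  x != 0 -> (y <= x)%MS.
Proof.
move=> hx hy hg xn0.
set g := C o0 o0 * C o1 o1 - C o0 o1 * C o1 o0 in hg.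
have ex0 := congr1 (fun M : 'rV[R]_3 => M ord0 o0) hx.
have ex1 := congr1 (fun M : 'rV[R]_3 => M ord0 o1) hx.
have ey0 := congr1 (fun M : 'rV[R]_3 => M ord0 o0) hy.
have ey1 := congr1 (fun M : 'rV[R]_3 => M ord0 o1) hy.
move: ex0 ex1 ey0 ey1; rewrite /= !vmE !mxE => ex0 ex1 ey0 ey1.
set al := C o2 o0 * C o1 o1 - C o2 o1 * C o1 o0.
set be := C o2 o1 * C o0 o0 - C o2 o0 * C o0 o1.
have fx0 : x ord0 o0 * g = - (x ord0 o2 * al).
  apply/eqP; rewrite -subr_eq0 opprK.
  have -> : x ord0 o0 * g + x ord0 o2 * al =
    C o1 o1 * (x ord0 o0 * C o0 o0 + x ord0 o1 * C o1 o0 + x ord0 o2 * C o2 o0)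
    - C o1 o0 * (x ord0 o0 * C o0 o1 + x ord0 o1 * C o1 o1 + x ord0 o2 * C o2 o1)
    by rewrite /g /al; ring.
  by rewrite ex0 ex1 !mulr0 subrr.
have fx1 : x ord0 o1 * g = - (x ord0 o2 * be).
  apply/eqP; rewrite -subr_eq0 opprK.
  have -> : x ord0 o1 * g + x ord0 o2 * be =
    C o0 o0 * (x ord0 o0 * C o0 o1 + x ord0 o1 * C o1 o1 + x ord0 o2 * C o2 o1)
    - C o0 o1 * (x ord0 o0 * C o0 o0 + x ord0 o1 * C o1 o0 + x ord0 o2 * C o2 o0)
    by rewrite /g /be; ring.
  by rewrite ex0 ex1 !mulr0 subrr.
have fy0 : y ord0 o0 * g = - (y ord0 o2 * al).
  apply/eqP; rewrite -subr_eq0 opprK.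
  have -> : y ord0 o0 * g + y ord0 o2 * al =
    C o1 o1 * (y ord0 o0 * C o0 o0 + y ord0 o1 * C o1 o0 + y ord0 o2 * C o2 o0)
    - C o1 o0 * (y ord0 o0 * C o0 o1 + y ord0 o1 * C o1 o1 + y ord0 o2 * C o2 o1)
    by rewrite /g /al; ring.
  by rewrite ey0 ey1 !mulr0 subrr.
have fy1 : y ord0 o1 * g = - (y ord0 o2 * be).
  apply/eqP; rewrite -subr_eq0 opprK.
  have -> : y ord0 o1 * g + y ord0 o2 * be =
    C o0 o0 * (y ord0 o0 * C o0 o1 + y ord0 o1 * C o1 o1 + y ord0 o2 * C o2 o1)
    - C o0 o1 * (y ord0 o0 * C o0 o0 + y ord0 o1 * C o1 o0 + y ord0 o2 * C o2 o0)
    by rewrite /g /be; ring.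
  by rewrite ey0 ey1 !mulr0 subrr.
have hx2 : x ord0 o2 != 0.
  apply/negP => /eqP h2.
  move: fx0 fx1; rewrite h2 !mul0r oppr0 => /eqP; rewrite mulf_eq0 (negbTE hg) orbF => /eqP h0.
  move/eqP; rewrite mulf_eq0 (negbTE hg) orbF => /eqP h1.
  move/eqP: xn0; apply; apply/rowP; elim/ord3P; by rewrite mxE.
apply/sub_rVP; exists (y ord0 o2 / x ord0 o2).
apply/rowP; elim/ord3P; rewrite mxE.
- apply: (mulIf hg); rewrite fy0.
  rewrite (_ : y ord0 o2 / x ord0 o2 * x ord0 o0 * g = y ord0 o2 / x ord0 o2 * (x ord0 o0 * g)); last by ring.
  by rewrite fx0; field.
- apply: (mulIf hg); rewrite fy1.
  rewrite (_ : y ord0 o2 / x ord0 o2 * x ord0 o1 * g = y ord0 o2 / x ord0 o2 * (x ord0 o1 * g)); last by ring.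
  by rewrite fx1; field.
- by rewrite divfK.
Qed.


Ltac pfauto H :=
  repeat (first [ apply: pf_add | apply: pf_sub | apply: pf_mul | apply: pf_opp
                | apply: pf_const | apply: H ]).

Lemma pf_minor (T I : Type) (R : comNzRingType) (env : T -> I -> R)
  (u v w : T -> 'rV[R]_3) : pfm env u -> pfm env v -> pfm env w ->
  pf env (fun t => minor (u t) (v t) (w t)).
Proof.
move=> hu hv hw; rewrite /minor /det3f.
apply: pf_add; first apply: pf_sub; (apply: pf_mul; [|apply: pf_sub; apply: pf_mul]);
  by [apply: hu | apply: hv | apply: hw].
Qed.

Lemma pf_gpol (T I : Type) (R : comNzRingType) (env : T -> I -> R)
  (Sf : T -> 'I_4 -> 'M[R]_3) (xf : T -> 'rV[R]_3) :
  (forall i, pfm env (fun t => Sf t i)) -> pfm env xf ->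
  pf env (fun t => gpol (Sf t) (xf t)).
Proof.
move=> hS hx.
have hxS : forall i, pfm env (fun t => xf t *m Sf t i).
  by move=> i; apply: pfm_mul.
have ha : forall i, pf env (fun t => acoef (Sf t) (xf t) i).
  move=> i; rewrite /acoef; case: i => [[|[|[|n]]] Hi] /=;
    rewrite -?/(pf _ _); try apply: pf_opp; try apply: pf_minor => //; exact: pf_const.
have hb : forall i, pf env (fun t => bcoef (Sf t) (xf t) i).
  move=> i; rewrite /bcoef; case: i => [[|[|[|n]]] Hi] /=;
    try apply: pf_opp; try apply: pf_minor => //; exact: pf_const.
have hP : pfm env (fun t => Pm (Sf t) (xf t)).
  by rewrite /Pm; apply: pfm_sum => i; apply: pfm_scale.
have hQ : pfm env (fun t => Qm (Sf t) (xf t)).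
  by rewrite /Qm; apply: pfm_sum => i; apply: pfm_scale.
have hC : pfm env (fun t => Cm (Sf t) (xf t)).
  by rewrite /Cm; apply: pfm_sub; apply: pfm_mul.
by rewrite /gpol; apply: pf_sub; apply: pf_mul; apply: hC.
Qed.

Definition e0 (R : nzRingType) : 'rV[R]_3 :=
  \row_j (match val j with 0 => -1 | 1 => 0 | _ => 1 end).

Lemma e0_neq0 (R : nzRingType) : e0 R != 0.
Proof.
apply/eqP => h; have := congr1 (fun M : 'rV[R]_3 => M ord0 o0) h.
by rewrite /= !mxE /=; move/eqP; rewrite oppr_eq0 oner_eq0.
Qed.

Lemma pfm_rc (R : comNzRingType) : pfm (@rcoords R) (fun x : 'rV[R]_3 => x).
Proof.
move=> i j; apply: (pf_ext (G := fun x => rcoords x j)); last exact: pf_var.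
by move=> x; rewrite /rcoords (ord1 i).
Qed.

Lemma inj_of (R : fieldType) (S : 'I_4 -> 'M[R]_3) :
  gpol S (e0 R) != 0 -> generically_injective S.
Proof.
move=> hg.
have [p hp] : pf (@rcoords R) (fun x => gpol S x).
  by apply: (pf_gpol (Sf := fun _ => S)) => [i|]; [apply: pfm_const | apply: pfm_rc].
exists (fun x => x != 0 /\ gpol S x != 0); split.
- exists [:: p]; split.
    case=> // _; exists 12%N => c x; by rewrite /= !hp gpol_scale.
  by move=> x; rewrite /= hp orbF.
- by exists (e0 R); split => //; apply: e0_neq0.
move=> x y [xn0 gx] yn0 hphi.
pose a : 'rV[R]_4 := \row_i acoef S x i.
pose b : 'rV[R]_4 := \row_i bcoef S x i.
have hsa : forall z, a *m secmx S z = z *m Pm S x.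
  move=> z; rewrite secmx_mul /Pm; congr (_ *m _); apply: eq_bigr => i _; by rewrite mxE.
have hsb : forall z, b *m secmx S z = z *m Qm S x.
  move=> z; rewrite secmx_mul /Qm; congr (_ *m _); apply: eq_bigr => i _; by rewrite mxE.
have hxa : (a *m secmx S x <= x)%MS by rewrite hsa xP; apply/sub_rVP; eexists.
have hxb : (b *m secmx S x <= x)%MS by rewrite hsb xQ; apply/sub_rVP; eexists.
move: hxa hxb; rewrite !hphi hsa hsb => /sub_rVP [mu hmu] /sub_rVP [nu hnu].
apply: (ker_line (C := Cm S x)) => //.
- by rewrite /Cm; apply: (eig_comm (xP S x) (xQ S x)).
- by rewrite /Cm; apply: (eig_comm hmu hnu).
Qed.


Lemma pfm_S (R : comNzRingType) (i : 'I_4) :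
  pfm (@coords4 R) (fun S : 'I_4 -> 'M[R]_3 => S i).
Proof. move=> j k; exact: (pf_var (@coords4 R) (i, j, k)). Qed.

Lemma pfm_Bn (R : comNzRingType) n :
  pfm (@coords4 R) (fun S : 'I_4 -> 'M[R]_3 => Bn S n).
Proof. by case: n => [|[|[|[|n]]]] /=; [apply: pfm_const | apply: pfm_S ..]. Qed.

Lemma pf_coef (T I : Type) (R : comNzRingType) (env : T -> I -> R)
  (Ba Bb Bc : T -> 'M[R]_3) m :
  (forall i j, pf env (fun t => Ba t i j)) ->
  (forall i j, pf env (fun t => Bb t i j)) ->
  (forall i j, pf env (fun t => Bc t i j)) ->
  pf env (fun t => coef (Ba t) (Bb t) (Bc t) m).
Proof.
move=> ha hb hc; rewrite /coef; case: m => [[|[|[|[|[|[|[|[|[|n]]]]]]]]] Hm] /=;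
rewrite /Tt /det3f;
repeat (first [ apply: pf_add | apply: pf_sub | apply: pf_mul | apply: pf_opp | apply: ha | apply: hb | apply: hc ]).
Qed.

Definition Fpol (R : comNzRingType) (S : 'I_4 -> 'M[R]_3) : R :=
  \det (Cmat S) * \det (Msub S) * gpol S (e0 R).

Lemma pf_F (R : comNzRingType) : pf (@coords4 R) (@Fpol R).
Proof.
rewrite /Fpol; apply: pf_mul; first apply: pf_mul.
- apply: pf_det => k m.
  apply: (pf_ext (G := fun S => coef (Bn S (tri k).1.1) (Bn S (tri k).1.2) (Bn S (tri k).2) m)).
    by move=> S; rewrite mxE.
  by apply: pf_coef; apply: pfm_Bn.
- apply: pf_det => i l.
  apply: (pf_ext (G := fun S : 'I_4 -> 'M[R]_3 => S i (rj l) (rk l))); first by move=> S; rewrite mxE.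
  exact: pfm_S.
- by apply: (pf_gpol (xf := fun _ => e0 R)) => [i|]; [apply: pfm_S | apply: pfm_const].
Qed.


Lemma ord10P (P : 'I_10 -> Prop) :
  P (O10 0) -> P (O10 1) -> P (O10 2) -> P (O10 3) -> P (O10 4) ->
  P (O10 5) -> P (O10 6) -> P (O10 7) -> P (O10 8) -> P (O10 9) -> forall i, P i.
Proof.
move=> h0 h1 h2 h3 h4 h5 h6 h7 h8 h9 [[|[|[|[|[|[|[|[|[|[|n]]]]]]]]]] Hi];
  try (by []); 
  [ rewrite (_ : Ordinal Hi = O10 0) | rewrite (_ : Ordinal Hi = O10 1)
  | rewrite (_ : Ordinal Hi = O10 2) | rewrite (_ : Ordinal Hi = O10 3)
  | rewrite (_ : Ordinal Hi = O10 4) | rewrite (_ : Ordinal Hi = O10 5)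
  | rewrite (_ : Ordinal Hi = O10 6) | rewrite (_ : Ordinal Hi = O10 7)
  | rewrite (_ : Ordinal Hi = O10 8) | rewrite (_ : Ordinal Hi = O10 9) ]; 
  by [|apply: val_inj].
Qed.

Lemma prod10 (R : comNzRingType) (F : 'I_10 -> R) : \prod_(i < 10) F i =
  F (O10 0) * F (O10 1) * F (O10 2) * F (O10 3) * F (O10 4) * F (O10 5) * F (O10 6)
  * F (O10 7) * F (O10 8) * F (O10 9).
Proof.
rewrite !big_ord_recl big_ord0 mulr1 !mulrA.
by congr (_ * _ * _ * _ * _ * _ * _ * _ * _ * _); congr F; apply: val_inj.
Qed.

Lemma prod4 (R : comNzRingType) (F : 'I_4 -> R) : \prod_(i < 4) F i =
  F p0 * F p1 * F p2 * F p3.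
Proof.
rewrite !big_ord_recl big_ord0 mulr1 !mulrA.
by congr (_ * _ * _ * _); congr F; apply: val_inj.
Qed.

Definition s0tbl (R : nzRingType) (i j k : nat) : R :=
  match i, j, k with
  | 0, 0, 1 => -1
  | 1, 0, 2 => 1 | 1, 2, 1 => 1
  | 2, 1, 2 => 1 | 2, 2, 0 => -1
  | 3, 1, 0 => 1
  | _, _, _ => 0 end.

Definition S0 (R : nzRingType) : 'I_4 -> 'M[R]_3 :=
  fun i => \matrix_(j, k) s0tbl R (val i) (val j) (val k).

Lemma V4_S0 (R : comNzRingType) : V4 (S0 R).
Proof. by elim/ord4P; rewrite /mxtrace sum3 !mxE /= !addr0. Qed.

Lemma Cmat_trig (R : comNzRingType) : is_trig_mx (Cmat (S0 R)).
Proof.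
apply/is_trig_mxP => i j; elim/ord10P: i; elim/ord10P: j => /= h; try (by []);
rewrite /Cmat mxE /tri /= /coef /= /Tt /det3f /Bn /S0 /I3 !mxE /=; ring.
Qed.


Lemma detC_S0 (R : comNzRingType) : \det (Cmat (S0 R)) = -1.
Proof.
rewrite det_trig ?Cmat_trig // prod10.
rewrite /Cmat !mxE /tri /= /coef /= /Tt /det3f /Bn /S0 /I3 !mxE /=; ring.
Qed.


Lemma Msub_trig (R : comNzRingType) : is_trig_mx (Msub (S0 R)).
Proof.
apply/is_trig_mxP => i j; elim/ord4P: i; elim/ord4P: j => /= h; try (by []);
rewrite /Msub /S0 !mxE /=; ring.
Qed.

Lemma detM_S0 (R : comNzRingType) : \det (Msub (S0 R)) = -1.
Proof.
rewrite det_trig ?Msub_trig // prod4 /Msub /S0 !mxE /=; ring.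
Qed.


Definition atbl (R : nzRingType) (n : nat) : R :=
  match n with 0 => 1 | 1 => -1 | 2 => 1 | _ => 0 end.
Definition btbl (R : nzRingType) (n : nat) : R :=
  match n with 3 => 1 | _ => 0 end.
Definition ptbl (R : nzRingType) (j k : nat) : R :=
  match j, k with
  | 0, 1 => -1 | 0, 2 => -1 | 1, 2 => 1 | 2, 0 => -1 | 2, 1 => -1 | _, _ => 0 end.
Definition qtbl (R : nzRingType) (j k : nat) : R :=
  match j, k with 1, 0 => 1 | _, _ => 0 end.

Lemma a_S0 (R : comNzRingType) i : acoef (S0 R) (e0 R) i = atbl R (val i).
Proof.
elim/ord4P: i; rewrite /acoef /= /minor /det3f ?vmE /S0 /e0 ?mxE /=; ring.
Qed.
Lemma b_S0 (R : comNzRingType) i : bcoef (S0 R) (e0 R) i = btbl R (val i).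
Proof.
elim/ord4P: i; rewrite /bcoef /= /minor /det3f ?vmE /S0 /e0 ?mxE /=; ring.
Qed.
Lemma P_S0 (R : comNzRingType) j k : Pm (S0 R) (e0 R) j k = ptbl R (val j) (val k).
Proof.
rewrite /Pm summxE sum4 !mxE !a_S0 /S0 ?mxE.
by elim/ord3P: j; elim/ord3P: k => /=; ring.
Qed.
Lemma Q_S0 (R : comNzRingType) j k : Qm (S0 R) (e0 R) j k = qtbl R (val j) (val k).
Proof.
rewrite /Qm summxE sum4 !mxE !b_S0 /S0 ?mxE.
by elim/ord3P: j; elim/ord3P: k => /=; ring.
Qed.
Lemma gpol_S0 (R : comNzRingType) : gpol (S0 R) (e0 R) = -1.
Proof.
rewrite /gpol /Cm !mxE !sum3 !P_S0 !Q_S0 /=; ring.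
Qed.

Theorem theorem1 (R : numClosedFieldType) :
  exists U : ('I_4 -> 'M[R]_3) -> Prop,
    [/\ zariski_open_V4 U,
        (forall S, U S -> admissible S),
        (exists S, U S) &
        (forall S, U S -> generically_injective S)].
Proof.
exists (fun S => V4 S /\ Fpol S != 0); split.
- split; first by move=> S [].
  have [p hp] := @pf_F R.
  exists [:: p] => S hV; rewrite /= hp orbF; split; first by case.
  by move=> h; split.
- move=> S [hV]; rewrite /Fpol !mulf_eq0 !negb_or => /andP [/andP [h1 h2] h3].
  split => //; [exact: li_of_det | exact: gen_of_det].
- exists (S0 R); split; first exact: V4_S0.
  rewrite /Fpol detC_S0 detM_S0 gpol_S0 !mulf_neq0 //; by rewrite oppr_eq0 oner_eq0.
- move=> S [hV]; rewrite /Fpol !mulf_eq0 !negb_or => /andP [_ h3].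
  exact: inj_of.
Qed.
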